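(* In the setting below, let $\mathfrak f=\mathrm{Im}\,\beta\subset\mathfrak g$, $\mathfrak f^\perp=\ker\beta\subset\mathfrak g^*$, and let $s:\mathfrak f\to\mathfrak g^*$ be a linear map with $\beta\circ s=\mathrm{id}_{\mathfrak f}$. Then $\mathfrak g\oplus i\mathfrak f$ is a real Lie subalgebra of $\hat{\mathfrak g}$, $\mathfrak f^\perp$ is a $(\mathfrak g\oplus i\mathfrak f)$-module under $(x+iy)\cdot a^*=\mathrm{ad}^*(x)a^*$, and for each sign the bilinear map $\tau_\pm(x_1+iy_1,x_2+iy_2)=\pm\big(\mathrm{ad}^*(x_1)s(y_2)-\mathrm{ad}^*(x_2)s(y_1)-s([x_1,y_2])+s([x_2,y_1])\big)$ ($x_j\in\mathfrak g$, $y_j\in\mathfrak f$) takes values in $\mathfrak f^\perp$ and is a $2$-cocycle of $\mathfrak g\oplus i\mathfrak f$ with values in $\mathfrak f^\perp$. Moreover $\mathcal D(\mathfrak g)\cong(\mathfrak g\oplus i\mathfrak f)\ltimes_{\tau_\pm}\mathfrak f^\perp$ as Lie algebras, via $(x+iy,a^* )\mapsto S_\pm(x+iy)+\iota(a^* )$, where $S_\pm(x+iy)=(x\mp\alpha(s(y)),\pm s(y))$ and $\iota(a^* )=(-\alpha(a^* ),a^* )$.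
   Context: Setting: $\mathfrak g$ is a finite-dimensional real Lie algebra and $r\in\mathfrak g\otimes\mathfrak g$ (identified with $r:\mathfrak g^*\to\mathfrak g$, $\langle r(a^* ),b^*\rangle=\langle a^*\otimes b^*,r\rangle$) is a solution of the type II CYBE $[r_{12},r_{13}]+[r_{12},r_{23}]+[r_{13},r_{23}]=\frac12[r_{13}+r_{31},r_{23}+r_{32}]$ (for $r=\sum a_i\otimes b_i$: $[r_{12},r_{13}]=\sum[a_i,a_j]\otimes b_i\otimes b_j$, $[r_{12},r_{23}]=\sum a_i\otimes[b_i,a_j]\otimes b_j$, $[r_{13},r_{23}]=\sum a_i\otimes a_j\otimes[b_i,b_j]$; with $r+\sigma(r)=\sum c_k\otimes d_k$, $[r_{13}+r_{31},r_{23}+r_{32}]=\sum c_k\otimes c_l\otimes[d_k,d_l]$), whose symmetric part $\beta=(r+r^t)/2$ is invariant ($(\mathrm{ad}(x)\otimes\mathrm{id}+\mathrm{id}\otimes\mathrm{ad}(x))\beta=0$); $\alpha=(r-r^t)/2$. Coadjoint action: $\langle\mathrm{ad}^*(x)a^*,y\rangle=-\langle a^*,[x,y]\rangle$. On $\mathfrak g^*$ set $[a^*,b^*]_\delta=\mathrm{ad}^*(\alpha(a^* ))b^*-\mathrm{ad}^*(\alpha(b^* ))a^*$ and for $a^*\in\mathfrak g^*,x\in\mathfrak g$ define $\mathrm{ad}^*(a^* )x\in\mathfrak g$ by $\langle\mathrm{ad}^*(a^* )x,b^*\rangle=-\langle x,[a^*,b^*]_\delta\rangle$. The Drinfeld double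 $\mathcal D(\mathfrak g)=\mathfrak g\oplus\mathfrak g^*$ has bracket $[(x,a^* ),(y,b^* )]=([x,y]+\mathrm{ad}^*(a^* )y-\mathrm{ad}^*(b^* )x,[a^*,b^*]_\delta+\mathrm{ad}^*(x)b^*-\mathrm{ad}^*(y)a^* )$. $\hat{\mathfrak g}=\mathfrak g\oplus i\mathfrak g$ is the complexification viewed as a real Lie algebra. For a Lie algebra $\mathfrak h$, an $\mathfrak h$-module $V$ and a 2-cocycle $\tau$, $\mathfrak h\ltimes_\tau V$ is $\mathfrak h\oplus V$ with bracket $[(X,u),(Y,v)]=([X,Y],X\cdot v-Y\cdot u+\tau(X,Y))$. *)

(* Defs.v *)
(* A finite-dimensional Lie algebra g over R is modelled as
   'rV[R]_n with a bracket; g^* is also 'rV[R]_n, paired with g via the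
   standard dual-basis pairing; tensors in g (x) g are n x n matrices. *)
From HB Require Import structures.
From mathcomp Require Import all_boot all_order all_algebra.
Set Implicit Arguments. Unset Strict Implicit. Unset Printing Implicit Defensive.
Import Order.TTheory GRing.Theory Num.Theory.
Local Open Scope ring_scope.

Definition ev {R : fieldType} {n : nat} (j : 'I_n) : 'rV[R]_n := delta_mx 0 j.

Definition dpair (R : fieldType) (n : nat) (a x : 'rV[R]_n) : R :=
  \sum_(i < n) a 0 i * x 0 i.

Definition is_lie_bracket (R : fieldType) (V : lmodType R) (br : V -> V -> V) : Prop :=
  (forall c x y z, br (c *: x + y) z = c *: br x z + br y z) /\
  (forall c x y z, br z (c *: x + y) = c *: br z x + br z y) /\
  (forall x, br x x = 0) /\
  (forall x y z, br x (br y z) + br y (br z x) + br z (br x y) = 0).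

Definition is_lie_subalgebra (R : fieldType) (V : lmodType R) (br : V -> V -> V)
  (P : V -> Prop) : Prop :=
  P 0 /\ (forall c x y, P x -> P y -> P (c *: x + y)) /\
  (forall x y, P x -> P y -> P (br x y)).

Definition is_lie_module (R : fieldType) (L W : lmodType R) (brL : L -> L -> L)
  (PL : L -> Prop) (PV : W -> Prop) (act : L -> W -> W) : Prop :=
  (forall X a, PL X -> PV a -> PV (act X a)) /\
  (forall c X Y a, PL X -> PL Y -> PV a -> act (c *: X + Y) a = c *: act X a + act Y a) /\
  (forall c X a b, PL X -> PV a -> PV b -> act X (c *: a + b) = c *: act X a + act X b) /\
  (forall X Y a, PL X -> PL Y -> PV a ->
     act (brL X Y) a = act X (act Y a) - act Y (act X a)).

Definition is_2cocycle (R : fieldType) (L W : lmodType R) (brL : L -> L -> L)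
  (PL : L -> Prop) (PV : W -> Prop) (act : L -> W -> W) (tau : L -> L -> W) : Prop :=
  (forall X Y, PL X -> PL Y -> PV (tau X Y)) /\
  (forall c X Y Z, PL X -> PL Y -> PL Z -> tau (c *: X + Y) Z = c *: tau X Z + tau Y Z) /\
  (forall c X Y Z, PL X -> PL Y -> PL Z -> tau Z (c *: X + Y) = c *: tau Z X + tau Z Y) /\
  (forall X, PL X -> tau X X = 0) /\
  (forall X Y Z, PL X -> PL Y -> PL Z ->
     act X (tau Y Z) + act Y (tau Z X) + act Z (tau X Y)
     = tau (brL X Y) Z + tau (brL Y Z) X + tau (brL Z X) Y).

Definition sd_bracket (R : fieldType) (L W : lmodType R) (brL : L -> L -> L)
  (act : L -> W -> W) (tau : L -> L -> W) (p q : L * W) : L * W :=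
  (brL p.1 q.1, act p.1 q.2 - act q.1 p.2 + tau p.1 q.1).

Definition is_lie_iso (R : fieldType) (A B : lmodType R) (P : A -> Prop)
  (brA : A -> A -> A) (brB : B -> B -> B) (phi : A -> B) : Prop :=
  (forall c x y, P x -> P y -> phi (c *: x + y) = c *: phi x + phi y) /\
  (forall x y, P x -> P y -> phi (brA x y) = brB (phi x) (phi y)) /\
  (forall x y, P x -> P y -> phi x = phi y -> x = y) /\
  (forall z, exists x, P x /\ phi x = z).

Section Coords.
Variables (R : fieldType) (n : nat) (br : 'rV[R]_n -> 'rV[R]_n -> 'rV[R]_n).

(* type II CYBE for r (r i j = coefficient of e_i (x) e_j), componentwise *)
Definition cybe2 (r : 'M[R]_n) : Prop :=
  forall k l m : 'I_n,
    \sum_(p < n) \sum_(p' < n) r p l * r p' m * br (ev p) (ev p') 0 k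
  + \sum_(q < n) \sum_(p' < n) r k q * r p' m * br (ev q) (ev p') 0 l
  + \sum_(q < n) \sum_(q' < n) r k q * r l q' * br (ev q) (ev q') 0 m
  = 2^-1 * \sum_(q < n) \sum_(q' < n)
       (r + r^T) k q * (r + r^T) l q' * br (ev q) (ev q') 0 m.

(* invariance of a symmetric tensor b : (ad x (x) id + id (x) ad x) b = 0 *)
Definition ad_invariant (b : 'M[R]_n) : Prop :=
  forall (x : 'rV[R]_n) (k l : 'I_n),
    \sum_(p < n) b p l * br x (ev p) 0 k + \sum_(q < n) b k q * br x (ev q) 0 l = 0.

Definition sym_part (r : 'M[R]_n) : 'M[R]_n := 2^-1 *: (r + r^T).
Definition skew_part (r : 'M[R]_n) : 'M[R]_n := 2^-1 *: (r - r^T).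

Definition coad (x a : 'rV[R]_n) : 'rV[R]_n := \row_j - dpair a (br x (ev j)).

(* bracket [a*, b*]_delta on g^*, with al = alpha as a matrix *)
Definition dbr (al : 'M[R]_n) (a b : 'rV[R]_n) : 'rV[R]_n :=
  coad (a *m al) b - coad (b *m al) a.

Definition coad_dual (al : 'M[R]_n) (a x : 'rV[R]_n) : 'rV[R]_n :=
  \row_j - dpair (dbr al a (ev j)) x.

Definition double_br (al : 'M[R]_n) (p q : 'rV[R]_n * 'rV[R]_n) : 'rV[R]_n * 'rV[R]_n :=
  (br p.1 q.1 + coad_dual al p.2 q.1 - coad_dual al q.2 p.1,
   dbr al p.2 q.2 + coad p.1 q.2 - coad q.1 p.2).

(* bracket of the complexification g (+) i g (pair (x,y) = x + i y) *)
Definition cplx_br (p q : 'rV[R]_n * 'rV[R]_n) : 'rV[R]_n * 'rV[R]_n :=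
  (br p.1 q.1 - br p.2 q.2, br p.1 q.2 + br p.2 q.1).

Definition tau_pm (eps : R) (s : 'rV[R]_n -> 'rV[R]_n) (X Y : 'rV[R]_n * 'rV[R]_n)
  : 'rV[R]_n :=
  eps *: (coad X.1 (s Y.2) - coad Y.1 (s X.2) - s (br X.1 Y.2) + s (br Y.1 X.2)).

Definition Phi_pm (eps : R) (s : 'rV[R]_n -> 'rV[R]_n) (al : 'M[R]_n)
  (p : ('rV[R]_n * 'rV[R]_n) * 'rV[R]_n) : 'rV[R]_n * 'rV[R]_n :=
  ((p.1.1 - eps *: (s p.1.2 *m al)) + (- (p.2 *m al)), eps *: s p.1.2 + p.2).

End Coords.

(* Main.v *)
Require Import Defs.
From HB Require Import structures.
From mathcomp Require Import all_boot all_order all_algebra.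
From Stdlib Require Import Ring.
Set Implicit Arguments. Unset Strict Implicit. Unset Printing Implicit Defensive.
Import Order.TTheory GRing.Theory Num.Theory.
Local Open Scope ring_scope.

Section Main.
Variable R : realFieldType.
Definition Radd (x y : R) : R := x + y.
Definition Rmul (x y : R) : R := x * y.
Definition Ropp (x : R) : R := - x.
Definition Rsub (x y : R) : R := x - y.
Definition R0 : R := 0.
Definition R1 : R := 1.
Lemma addE (x y : R) : x + y = Radd x y. Proof. by []. Qed.
Lemma mulE (x y : R) : x * y = Rmul x y. Proof. by []. Qed.
Lemma oppE (x : R) : - x = Ropp x. Proof. by []. Qed.
Lemma zeroE : (0 : R) = R0. Proof. by []. Qed.
Lemma oneE : (1 : R) = R1. Proof. by []. Qed.
Lemma Rring : @ring_theory R R0 R1 Radd Rmul Rsub Ropp eq.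
Proof. split; rewrite /Radd/Rmul/Rsub/Ropp/R0/R1 => *.
 exact: add0r. exact: addrC. exact: addrA. exact: mul1r. exact: mulrC. exact: mulrA. exact: mulrDl. by []. exact: subrr. Qed.
Add Ring Rrng : Rring.
Ltac genP := repeat match goal with |- context [@dpair _ _ ?a ?b] =>
  let X := fresh "X" in move: (@dpair _ _ a b) => X end.
Ltac rng := genP; rewrite ?addE ?mulE ?oppE ?zeroE ?oneE; match goal with |- @eq _ ?a ?b => change (@eq R a b) end; ring.

Variable n : nat.
Local Notation V := ('rV[R]_n).
Local Notation P := (@dpair R n).

Lemma dpairDl (a b x : V) : P (a + b) x = P a x + P b x.
Proof. rewrite /dpair -big_split /=; apply: eq_bigr => i _; by rewrite mxE mulrDl. Qed.
Lemma dpairZl c (a x : V) : P (c *: a) x = c * P a x.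
Proof. rewrite /dpair mulr_sumr; apply: eq_bigr => i _; by rewrite mxE mulrA. Qed.
Lemma dpairC (a x : V) : P a x = P x a.
Proof. rewrite /dpair; apply: eq_bigr => i _; by rewrite mulrC. Qed.
Lemma dpairDr (a b x : V) : P x (a + b) = P x a + P x b.
Proof. by rewrite !(dpairC x) dpairDl. Qed.
Lemma dpairZr c (a x : V) : P x (c *: a) = c * P x a.
Proof. by rewrite !(dpairC x) dpairZl. Qed.
Lemma dpair0l (x : V) : P 0 x = 0.
Proof. by rewrite -(scale0r 0) dpairZl mul0r. Qed.
Lemma dpair0r (x : V) : P x 0 = 0.
Proof. by rewrite dpairC dpair0l. Qed.
Lemma dpairNl (a x : V) : P (- a) x = - P a x.
Proof. by rewrite -scaleN1r dpairZl mulN1r. Qed.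
Lemma dpairNr (a x : V) : P x (- a) = - P x a.
Proof. by rewrite !(dpairC x) dpairNl. Qed.
Lemma dpair_evl j (x : V) : P (ev j) x = x 0 j.
Proof.
rewrite /dpair (bigD1 j) //= big1 ?addr0 => [|i ij]; rewrite /ev mxE.
  by rewrite !eqxx /= mul1r.
by rewrite eqxx (negbTE ij) /= mul0r.
Qed.
Lemma dpair_evr j (x : V) : P x (ev j) = x 0 j.
Proof. by rewrite dpairC dpair_evl. Qed.
Lemma vext (u v : V) : (forall c, P c u = P c v) -> u = v.
Proof. move=> H; apply/rowP => j; by rewrite -!dpair_evl H. Qed.
Lemma vext' (u v : V) : (forall y, P u y = P v y) -> u = v.
Proof. move=> H; apply/rowP => j; by rewrite -!dpair_evr H. Qed.
Lemma dpair_mulr (c w : V) (M : 'M[R]_n) : P c (w *m M) = P w (c *m M^T).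
Proof.
rewrite /dpair; under eq_bigr => i _ do rewrite mxE mulr_sumr.
under [RHS]eq_bigr => i _ do rewrite mxE mulr_sumr.
rewrite exchange_big /=; apply: eq_bigr => i _; apply: eq_bigr => j _.
by rewrite mxE mulrCA mulrA.
Qed.
Lemma dpair_sumr I (r : seq I) (F : I -> V) (c : V) : P c (\sum_(i <- r) F i) = \sum_(i <- r) P c (F i).
Proof.
elim: r => [|i r IH]; first by rewrite !big_nil dpair0r.
by rewrite !big_cons dpairDr IH.
Qed.

Definition lin (f : V -> V) := forall c u v, f (c *: u + v) = c *: f u + f v.
Definition slin (f : V -> R) := forall c u v, f (c *: u + v) = c * f u + f v.

Lemma lin0 f : lin f -> f 0 = 0.
Proof. move=> H; have := H (-1) 0 0; rewrite scaler0 add0r scaleN1r => E.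
by rewrite E addNr. Qed.
Lemma lin_expand f : lin f -> forall u, f u = \sum_(j < n) u 0 j *: f (ev j).
Proof.
move=> H u; rewrite {1}(row_sum_delta u).
elim/big_rec2: _ => [|j s1 s2 _ <-]; first exact: lin0.
by rewrite H.
Qed.
Lemma slin0 f : slin f -> f 0 = 0.
Proof. move=> H; have := H (-1) 0 0; rewrite scaler0 add0r mulN1r => E.
by rewrite E addNr. Qed.
Lemma slin_expand f : slin f -> forall u, f u = \sum_(j < n) u 0 j * f (ev j).
Proof.
move=> H u; rewrite {1}(row_sum_delta u).
elim/big_rec2: _ => [|j s1 s2 _ <-]; first exact: slin0.
by rewrite H.
Qed.


Variable br : V -> V -> V.
Hypothesis Hlie : is_lie_bracket br.

Lemma brL c x y z : br (c *: x + y) z = c *: br x z + br y z.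
Proof. by case: Hlie. Qed.
Lemma brR c x y z : br z (c *: x + y) = c *: br z x + br z y.
Proof. by case: Hlie => _ []. Qed.
Lemma brxx x : br x x = 0.
Proof. by case: Hlie => _ [_ []]. Qed.
Lemma jacobi x y z : br x (br y z) + br y (br z x) + br z (br x y) = 0.
Proof. by case: Hlie => _ [_ [_]]. Qed.
Lemma br0l z : br 0 z = 0.
Proof. have := brL (-1) 0 0 z; rewrite scaler0 add0r scaleN1r => E. by rewrite E addNr. Qed.
Lemma br0r z : br z 0 = 0.
Proof. have := brR (-1) 0 0 z; rewrite scaler0 add0r scaleN1r => E. by rewrite E addNr. Qed.
Lemma brDl x y z : br (x + y) z = br x z + br y z.
Proof. by rewrite -(scale1r x) brL !scale1r. Qed.
Lemma brDr x y z : br z (x + y) = br z x + br z y.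
Proof. by rewrite -(scale1r x) brR !scale1r. Qed.
Lemma brZl c x z : br (c *: x) z = c *: br x z.
Proof. by rewrite -(addr0 (c *: x)) brL br0l addr0. Qed.
Lemma brZr c x z : br z (c *: x) = c *: br z x.
Proof. by rewrite -(addr0 (c *: x)) brR br0r addr0. Qed.
Lemma brNl x z : br (- x) z = - br x z.
Proof. by rewrite -scaleN1r brZl scaleN1r. Qed.
Lemma brNr x z : br z (- x) = - br z x.
Proof. by rewrite -scaleN1r brZr scaleN1r. Qed.
Lemma br_anti x y : br x y = - br y x.
Proof.
have := brxx (x + y); rewrite brDl !brDr !brxx add0r addr0 => /eqP.
by rewrite addr_eq0 => /eqP.
Qed.

Lemma coadP x (a y : V) : P (coad br x a) y = - P a (br x y).
Proof.
have L : slin (fun y => P a (br x y)).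
  by move=> c u v; rewrite brR dpairDr dpairZr.
rewrite (slin_expand L y) /dpair -sumrN; apply: eq_bigr => i _.
by rewrite mxE mulrC mulrN.
Qed.

Lemma scalemxAl' m p a (A : 'M[R]_(m, n)) (B : 'M_(n, p)) : (a *: A) *m B = a *: (A *m B).
Proof. by rewrite scalemxAl. Qed.


Ltac pexp0 := rewrite ?(dpairDl, dpairDr, dpairZl, dpairZr, dpairNl, dpairNr, dpair0l, dpair0r,
  brDl, brDr, brZl, brZr, brNl, brNr, br0l, br0r, coadP).
Lemma coadDr x (a b : V) : coad br x (a + b) = coad br x a + coad br x b.
Proof. apply: vext' => y; pexp0; rng. Qed.
Lemma coadZr c x (a : V) : coad br x (c *: a) = c *: coad br x a.
Proof. apply: vext' => y; pexp0; rng. Qed.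
Lemma coadNr x (a : V) : coad br x (- a) = - coad br x a.
Proof. apply: vext' => y; pexp0; rng. Qed.
Lemma coadDl x x' (a : V) : coad br (x + x') a = coad br x a + coad br x' a.
Proof. apply: vext' => y; pexp0; rng. Qed.
Lemma coadZl c x (a : V) : coad br (c *: x) a = c *: coad br x a.
Proof. apply: vext' => y; pexp0; rng. Qed.
Lemma coadNl x (a : V) : coad br (- x) a = - coad br x a.
Proof. apply: vext' => y; pexp0; rng. Qed.
Lemma coad0l (a : V) : coad br 0 a = 0.
Proof. apply: vext' => y; pexp0; rng. Qed.
Lemma coad0r (x : V) : coad br x 0 = 0.
Proof. apply: vext' => y; pexp0; rng. Qed.


Ltac pexp := rewrite ?(dpairDl, dpairDr, dpairZl, dpairZr, dpairNl, dpairNr, dpair0l, dpair0r,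
  brDl, brDr, brZl, brZr, brNl, brNr, br0l, br0r, coadP, mulmxDl, mulNmx, scalemxAl', mul0mx,
  coadDr, coadDl, coadZl, coadZr, coadNl, coadNr, coad0l, coad0r).

Lemma hh : (2^-1 : R) + 2^-1 = 1.
Proof. by rewrite -mulr2n -[(2^-1 : R) *+ 2]mulr_natr mulVf // pnatr_eq0. Qed.

Lemma br_entry x (v : V) k : br x v 0 k = \sum_(p < n) v 0 p * br x (ev p) 0 k.
Proof.
have L : lin (br x) by move=> c u w; rewrite brR.
by rewrite (lin_expand L v) summxE; apply: eq_bigr => p _; rewrite mxE.
Qed.
Lemma br_entry2 (u v : V) k :
  br u v 0 k = \sum_(p < n) \sum_(q < n) u 0 p * v 0 q * br (ev p) (ev q) 0 k.
Proof.
have L : lin (br^~ v) by move=> c u' w; rewrite brL.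
rewrite (lin_expand L u) summxE; apply: eq_bigr => p _; rewrite mxE br_entry mulr_sumr.
by apply: eq_bigr => q _; rewrite mulrA.
Qed.
Lemma ev_mul j (M : 'M[R]_n) p : (ev j *m M) 0 p = M j p.
Proof. by rewrite /ev -rowE mxE. Qed.

Lemma ext2 (F : V -> V -> R) : (forall b, slin (F^~ b)) -> (forall a, slin (F a)) ->
  (forall l k, F (ev l) (ev k) = 0) -> forall a b, F a b = 0.
Proof.
move=> H1 H2 H0 a b; rewrite (slin_expand (H1 b) a) big1 // => l _.
by rewrite (slin_expand (H2 _) b) big1 ?mulr0 // => k _; rewrite H0 mulr0.
Qed.
Lemma ext3 (F : V -> V -> V -> R) : (forall b c, slin (fun a => F a b c)) ->
  (forall a c, slin (fun b => F a b c)) -> (forall a b, slin (F a b)) ->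
  (forall i j k, F (ev i) (ev j) (ev k) = 0) -> forall a b c, F a b c = 0.
Proof.
move=> H1 H2 H3 H0 a b c.
rewrite (slin_expand (H1 b c) a) big1 // => i _.
rewrite (slin_expand (H2 _ c) b) big1 ?mulr0 // => j _.
rewrite (slin_expand (H3 _ _) c) big1 ?mulr0 // => k _.
by rewrite H0 mulr0.
Qed.

Section Mat.
Variable r : 'M[R]_n.
Hypothesis Hcy : cybe2 br r.
Hypothesis Hinv : ad_invariant br (sym_part r).
Local Notation be := (sym_part r).
Local Notation al := (skew_part r).

Lemma beT : be^T = be.
Proof. apply/matrixP => i j; rewrite /sym_part !mxE. move: (2^-1 : R) (r i j) (r j i) => h a b. rng. Qed.
Lemma alT : al^T = - al.
Proof. apply/matrixP => i j; rewrite /skew_part !mxE. move: (2^-1 : R) (r i j) (r j i) => h a b. rng. Qed.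
Lemma r_split : r = al + be.
Proof.
apply/matrixP => i j; rewrite /skew_part /sym_part !mxE.
transitivity ((2^-1 + 2^-1) * r i j); first by rewrite hh mul1r.
move: (2^-1 : R) (r i j) (r j i) => h a b. rng.
Qed.
Lemma rT_split : r^T = be - al.
Proof. by rewrite {1}r_split linearD /= alT beT addrC. Qed.
Lemma rrT : r + r^T = be + be.
Proof. apply/matrixP => i j; rewrite {1}r_split rT_split !mxE. move: (al i j) (be i j) => a b; rng. Qed.

Lemma dp_be (c w : V) : P c (w *m be) = P w (c *m be).
Proof. by rewrite dpair_mulr beT. Qed.
Lemma dp_al (c w : V) : P c (w *m al) = - P w (c *m al).
Proof. by rewrite dpair_mulr alT mulmxN dpairNr. Qed.

Lemma Inv x (a b : V) : P b (br x (a *m be)) = - P a (br x (b *m be)).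
Proof.
apply/eqP; rewrite -addr_eq0; apply/eqP; move: a b.
apply: ext2 => [b c u v|a c u v|l k]; first by pexp; rng.
  by pexp; rng.
rewrite !dpair_evl !br_entry.
rewrite -[RHS](Hinv x k l); congr (_ + _); apply: eq_bigr => p _; rewrite ev_mul //.
by rewrite -{1}beT mxE.
Qed.

Lemma CY (a b c : V) : P c (br (a *m r^T) (b *m r^T)) + P a (br (c *m r) (b *m r^T))
  + P b (br (c *m r) (a *m r)) = 2^-1 * P b (br (c *m (r + r^T)) (a *m (r + r^T))).
Proof.
apply/eqP; rewrite -subr_eq0; apply/eqP; move: c a b.
apply: ext3 => [a b u v w|c b u v w|c a u v w|k l m]; try by pexp; rng.
rewrite !dpair_evl !br_entry2.
rewrite -[RHS](subrr (2^-1 * \sum_(q < n) \sum_(q' < n)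
       (r + r^T) k q * (r + r^T) l q' * br (ev q) (ev q') 0 m)).
rewrite -{1}(Hcy k l m); congr (_ + _ + _ - _).
- by apply: eq_bigr => p _; apply: eq_bigr => q _; rewrite !ev_mul !mxE.
- by apply: eq_bigr => p _; apply: eq_bigr => q _; rewrite !ev_mul !mxE.
- by apply: eq_bigr => p _; apply: eq_bigr => q _; rewrite !ev_mul.
- by congr (_ * _); apply: eq_bigr => p _; apply: eq_bigr => q _; rewrite !ev_mul.
Qed.

Lemma mulr_split (u : V) : u *m r = u *m al + u *m be.
Proof. by rewrite {1}r_split mulmxDr. Qed.
Lemma mulrT_split (u : V) : u *m r^T = u *m be - u *m al.
Proof. by rewrite rT_split mulmxBr. Qed.
Lemma mulrrT (u : V) : u *m (r + r^T) = u *m be + u *m be.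
Proof. by rewrite rrT mulmxDr. Qed.

Ltac use_eq C := apply/eqP; rewrite -subr_eq0; apply/eqP;
  match type of C with ?x = ?y => first [transitivity (x - y); [ rng | by rewrite C subrr]
     | transitivity (y - x); [ rng | by rewrite C subrr]] end.

Lemma EqB (a b c : V) :
  P c (br (a *m al) (b *m al)) - P a (br (c *m al) (b *m al)) + P b (br (c *m al) (a *m al))
  = P c (br (a *m be) (b *m be)).
Proof.
have C := CY a b c.
have H4 : 2^-1 * P b (br (c *m be + c *m be) (a *m be + a *m be))
   = P b (br (c *m be) (a *m be)) + P b (br (c *m be) (a *m be)).
  pexp; transitivity ((2^-1 + 2^-1) * (P b (br (c *m be) (a *m be)) + P b (br (c *m be) (a *m be)))).
    move: (P b (br (c *m be) (a *m be))) (2^-1 : R) => X h; rng.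
  by rewrite hh mul1r.
rewrite !mulrrT H4 !mulr_split !mulrT_split in C.
move: C; pexp => C.
rewrite (Inv (c *m be) b a) in C.
rewrite (br_anti (c *m be) (a *m be)) dpairNr (Inv (a *m be) c b) in C.
rewrite (Inv (a *m al) b c) in C.
rewrite (br_anti (c *m be) (a *m al)) dpairNr in C.
rewrite (br_anti (a *m be) (b *m al)) dpairNr (Inv (b *m al) a c) in C.
rewrite (br_anti (c *m be) (b *m al)) dpairNr in C.
rewrite (Inv (c *m al) b a) in C.
use_eq C.
Qed.

Lemma coad_dualP (a b x : V) : P b (coad_dual br al a x) = - P (dbr br al a b) x.
Proof.
have L : slin (fun b => P (dbr br al a b) x).
  by move=> k u v; rewrite /dbr; pexp; rng.
rewrite (slin_expand L b) /dpair -sumrN; apply: eq_bigr => i _.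
by rewrite mxE mulrN.
Qed.

Lemma DoubleCore (x1 x2 u1 u2 : V) :
  double_br br al (x1 - u1 *m al, u1) (x2 - u2 *m al, u2)
  = (br x1 x2 - br (u1 *m be) (u2 *m be) - (coad br x1 u2 - coad br x2 u1) *m al,
     coad br x1 u2 - coad br x2 u1).
Proof.
rewrite /double_br /=; congr (_, _).
  apply: vext => c; rewrite !dpairDr !dpairNr !coad_dualP /dbr.
  pexp. rewrite !(dp_al c (coad br _ _)). pexp.
  rewrite (br_anti (u2 *m al) x1) (br_anti (u2 *m al) (u1 *m al)) (br_anti x1 (c *m al)) (br_anti x2 (c *m al)).
  pexp. use_eq (EqB u1 u2 c).
apply: vext' => y; rewrite /dbr; pexp; rng.
Qed.

Lemma Inv2 x (a : V) : coad br x a *m be = br x (a *m be).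
Proof. by apply: vext => c; rewrite dp_be coadP Inv opprK. Qed.

Lemma L1 (a b y z : V) : P b (br (br (a *m be) y) z) = P a (br y (br z (b *m be))).
Proof.
rewrite br_anti (br_anti _ y) brNr opprK -Inv2 Inv.
by rewrite coadP opprK.
Qed.

Lemma jac2 (a b c : V) : br (br a b) c = br a (br b c) + br b (br c a).
Proof.
have J := jacobi a b c.
rewrite br_anti; apply/eqP; rewrite eq_sym -subr_eq0 opprK; exact/eqP.
Qed.

Lemma inF_brl x y : (y <= be)%MS -> (br x y <= be)%MS.
Proof. by case/submxP => D ->; rewrite -Inv2 submxMl. Qed.
Lemma inF_brr x y : (y <= be)%MS -> (br y x <= be)%MS.
Proof. by move=> H; rewrite br_anti -scaleN1r scalemx_sub // inF_brl. Qed.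
Lemma perp (a y : V) : a *m be = 0 -> (y <= be)%MS -> P a y = 0.
Proof. by move=> Ha /submxP [D ->]; rewrite dp_be Ha dpair0r. Qed.

Ltac memF := first [ assumption | apply: sub0mx | apply: submxMl
  | apply: addmx_sub; memF | apply: scalemx_sub; memF
  | apply: inF_brl; memF | apply: inF_brr; memF ].

Section Thm.
Variable s : V -> V.
Variable eps : R.
Hypothesis Hs : forall c (y1 y2 : V), (y1 <= be)%MS -> (y2 <= be)%MS ->
     s (c *: y1 + y2) = c *: s y1 + s y2.
Hypothesis Hsb : forall y : V, (y <= be)%MS -> s y *m be = y.
Hypothesis Heps : eps = 1 \/ eps = -1.

Lemma eps2 : eps * eps = 1.
Proof. by case: Heps => ->; rewrite ?mulr1 ?mulrNN ?mulr1. Qed.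

Definition sL (v : V) := s (v *m pinvmx be *m be).
Lemma sLlin : lin sL.
Proof.
move=> c u v; rewrite /sL !mulmxDl -!scalemxAl Hs //; exact: submxMl.
Qed.
Lemma sL0 : sL 0 = 0. Proof. exact: (lin0 sLlin). Qed.
Lemma sLD u v : sL (u + v) = sL u + sL v.
Proof. by rewrite -(scale1r u) sLlin !scale1r. Qed.
Lemma sLZ c u : sL (c *: u) = c *: sL u.
Proof. by rewrite -(addr0 (c *: u)) sLlin sL0 addr0. Qed.
Lemma sLN u : sL (- u) = - sL u.
Proof. by rewrite -scaleN1r sLZ scaleN1r. Qed.
Lemma sE y : (y <= be)%MS -> s y = sL y.
Proof. by move=> H; rewrite /sL mulmxKpV. Qed.
Lemma sLbe y : (y <= be)%MS -> sL y *m be = y.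
Proof. by move=> H; rewrite -sE // Hsb. Qed.

Lemma L_sub : is_lie_subalgebra (cplx_br br) (fun X : V * V => (X.2 <= be)%MS).
Proof.
split; first exact: sub0mx.
split; first by move=> c X Y HX HY /=; memF.
by move=> X Y HX HY /=; memF.
Qed.

Lemma L_mod : is_lie_module (cplx_br br) (fun X : V * V => (X.2 <= be)%MS)
  (fun a : V => a *m be = 0) (fun (X : V * V) (a : V) => coad br X.1 a).
Proof.
split; first by move=> X a _ Ha /=; rewrite Inv2 Ha br0r.
split; first by move=> c X Y a _ _ _ /=; rewrite coadDl coadZl.
split; first by move=> c X a b _ _ _ /=; rewrite coadDr coadZr.
move=> [x1 y1] [x2 y2] a /= HX HY Ha.
apply: vext' => z; pexp.
rewrite (perp (y := br (br y1 y2) z) Ha); last by memF.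
have J := congr1 (P a) (jacobi x1 x2 z); move: J; pexp => J.
rewrite (br_anti (br x1 x2) z) (br_anti x1 z); pexp.
use_eq J.
Qed.

Lemma jac3 (a b c : V) : br (br a b) c = - br (br b c) a - br (br c a) b.
Proof.
apply: vext => w; have J := congr1 (P w) (jacobi a b c); move: J; pexp => J.
rewrite (br_anti (br b c) a) (br_anti (br c a) b) (br_anti (br a b) c); pexp.
use_eq J.
Qed.

Lemma cycP (y1 y2 y3 z : V) : (y1 <= be)%MS -> (y2 <= be)%MS -> (y3 <= be)%MS ->
  P (sL y3) (br (br y1 y2) z) = - P (sL y1) (br (br y2 y3) z) - P (sL y2) (br (br y3 y1) z).
Proof.
move=> H1 H2 H3.
have E3 : P (sL y3) (br (br y1 y2) z) = P (sL y1) (br y2 (br z y3)).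
  by rewrite -{1}(sLbe H1) L1 sLbe.
have E2 : P (sL y2) (br (br y3 y1) z) = - P (sL y1) (br y3 (br z y2)).
  by rewrite (br_anti y3 y1) brNl dpairNr -{1}(sLbe H1) L1 sLbe.
rewrite E3 E2.
have J := congr1 (P (sL y1)) (jacobi y2 z y3).
rewrite (br_anti y3 y2) (br_anti y2 z) in J; move: J; pexp => J; rewrite (br_anti (br y2 y3) z); pexp.
use_eq J.
Qed.

Ltac toSL := rewrite ?sE; try by memF.
Ltac sexp := rewrite ?(brDl, brDr, brZl, brZr, brNl, brNr, br0l, br0r, sLD, sLZ, sLN, sL0).

Lemma L_coc : is_2cocycle (cplx_br br) (fun X : V * V => (X.2 <= be)%MS)
  (fun a : V => a *m be = 0) (fun (X : V * V) (a : V) => coad br X.1 a) (tau_pm br eps s).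
Proof.
split.
  move=> [x1 y1] [x2 y2] /= H1 H2; rewrite /tau_pm /=; toSL.
  rewrite scalemxAl' !mulmxDl !mulNmx !Inv2 !sLbe; try by memF.
  by apply: vext => w; pexp; rng.
split.
  move=> c [x1 y1] [x2 y2] [x3 y3] /= H1 H2 H3; rewrite /tau_pm /=; toSL.
  by sexp; apply: vext => w; pexp; rng.
split.
  move=> c [x1 y1] [x2 y2] [x3 y3] /= H1 H2 H3; rewrite /tau_pm /=; toSL.
  by sexp; apply: vext => w; pexp; rng.
split.
  by move=> [x1 y1] /= H1; rewrite /tau_pm /=; apply: vext => w; pexp; rng.
move=> [x1 y1] [x2 y2] [x3 y3] /= H1 H2 H3; rewrite /tau_pm /=; toSL.
rewrite !brDl !brNl (jac2 x1 x2 y3) (jac2 x2 x3 y1) (jac2 x3 x1 y2) (jac3 y1 y2 y3).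
sexp.
apply: vext' => z; pexp.
rewrite (cycP z H1 H2 H3).
rewrite (jac2 x1 x2 z) (jac2 x2 x3 z) (jac2 x3 x1 z).
rewrite (br_anti z x1) (br_anti z x2) (br_anti z x3).
rewrite (br_anti y1 x2) (br_anti y2 x3) (br_anti y3 x1).
sexp; pexp.
rng.
Qed.

Lemma L_iso : is_lie_iso
  (fun p : (V * V) * V => (p.1.2 <= be)%MS /\ p.2 *m be = 0)
  (sd_bracket (cplx_br br) (fun (X : V * V) (a : V) => coad br X.1 a) (tau_pm br eps s))
  (double_br br al) (Phi_pm eps s al).
Proof.
split.
  move=> c [[x1 y1] a1] [[x2 y2] a2] /= [H1 _] [H2 _]; rewrite /Phi_pm /=; toSL.
  sexp; congr (_, _); apply: vext => w; pexp; rng.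
split.
  move=> [[x1 y1] a1] [[x2 y2] a2] /= [H1 Ha1] [H2 Ha2].
  have PhiE : forall x y a, (y <= be)%MS -> Phi_pm eps s al (x, y, a)
      = (x - (eps *: sL y + a) *m al, eps *: sL y + a).
    move=> x y a Hy; rewrite /Phi_pm /= (sE Hy); congr (_, _).
    by rewrite mulmxDl scalemxAl' opprD addrA.
  rewrite (PhiE _ _ _ H1) (PhiE _ _ _ H2) DoubleCore.
  rewrite /sd_bracket /Phi_pm /tau_pm /cplx_br /=; toSL.
  have Eu : forall y a, (y <= be)%MS -> a *m be = 0 -> (eps *: sL y + a) *m be = eps *: y.
    by move=> y a Hy Ha; rewrite mulmxDl Ha addr0 scalemxAl' sLbe.
  rewrite (Eu _ _ H1 Ha1) (Eu _ _ H2 Ha2) brZl brZr scalerA eps2 scale1r.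
  sexp; congr (_, _).
    apply: vext => w; pexp.
    rewrite (br_anti y1 x2); sexp; pexp.
    by pexp; rng.
  apply: vext' => w; rewrite (br_anti y1 x2); sexp; pexp; rng.
split.
  move=> [[x1 y1] a1] [[x2 y2] a2] /= [H1 Ha1] [H2 Ha2]; rewrite /Phi_pm /=.
  case=> E1 E2.
  have Ey : y1 = y2.
    have := congr1 (fun v => v *m be) E2; rewrite /= !mulmxDl Ha1 Ha2 !addr0 !scalemxAl' !Hsb //.
    move/(congr1 (fun v => eps *: v)); by rewrite !scalerA eps2 !scale1r.
  subst y2.
  have Ea : a1 = a2 by apply: (addrI (eps *: s y1)).
  subst a2.
  have Ex : x1 = x2 by move: E1 => /addIr /addIr.
  by subst x2.
move=> [u b].
exists ((u + b *m al, eps *: (b *m be)), b - eps *: s (eps *: (b *m be))).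
have Hy : (eps *: (b *m be) <= be)%MS by memF.
split; first split => /=.
- exact: Hy.
- rewrite mulmxDl mulNmx scalemxAl' Hsb // scalerA eps2 scale1r subrr //.
rewrite /Phi_pm /=; congr (_, _).
  by apply: vext => w; pexp; rng.
by rewrite addrC subrK.
Qed.

End Thm.
End Mat.
End Main.

Theorem theorem3p20 (R : realFieldType) (n : nat)
  (br : 'rV[R]_n -> 'rV[R]_n -> 'rV[R]_n) (r : 'M[R]_n)
  (s : 'rV[R]_n -> 'rV[R]_n) (eps : R) :
  is_lie_bracket br ->
  cybe2 br r ->
  ad_invariant br (sym_part r) ->
  (* s : f -> g^* linear, f = Im beta *)
  (forall c (y1 y2 : 'rV[R]_n), (y1 <= sym_part r)%MS -> (y2 <= sym_part r)%MS ->
     s (c *: y1 + y2) = c *: s y1 + s y2) ->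
  (* beta o s = id_f *)
  (forall y : 'rV[R]_n, (y <= sym_part r)%MS -> s y *m sym_part r = y) ->
  (eps = 1 \/ eps = -1) ->
  let beta := sym_part r in
  let alpha := skew_part r in
  let inL := fun X : 'rV[R]_n * 'rV[R]_n => (X.2 <= beta)%MS in
  let inFperp := fun a : 'rV[R]_n => a *m beta = 0 in
  let act := fun (X : 'rV[R]_n * 'rV[R]_n) (a : 'rV[R]_n) => coad br X.1 a in
  let tau := tau_pm br eps s in
  is_lie_subalgebra (cplx_br br) inL /\
  is_lie_module (cplx_br br) inL inFperp act /\
  is_2cocycle (cplx_br br) inL inFperp act tau /\
  is_lie_iso (fun p : ('rV[R]_n * 'rV[R]_n) * 'rV[R]_n => inL p.1 /\ inFperp p.2)
    (sd_bracket (cplx_br br) act tau) (double_br br alpha) (Phi_pm eps s alpha).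
Proof.
move=> Hlie Hcy Hinv Hs Hsb Heps.
split; first exact (L_sub Hlie Hinv).
split; first exact (L_mod Hlie Hinv).
split; first exact (L_coc Hlie Hinv eps Hs Hsb).
exact (L_iso Hlie Hcy Hinv Hs Hsb Heps).
Qed.
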